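(* There exists a complete bifurcate tree over an alphabet of size $12$.
   Context: A square is a nonempty word of the form $XX$; a word is square-free if it has no (contiguous) factor that is a square. For a word $W$ of length $n$ and $0\le i\le n$, let $P_i(W)$, $S_i(W)$ be the prefix and suffix of $W$ of length $i$; an extension of $W$ at position $i$ over alphabet $\mathcal{A}$ is a word $P_i(W)\mathtt{x}S_{n-i}(W)$ with $\mathtt{x}\in\mathcal{A}$. A square-free word of length $n$ is bifurcate over $\mathcal{A}$ if for each position $i\in\{0,\dots,n\}$ it has a square-free extension at position $i$. A bifurcate tree over $\mathcal{A}$ is a family of bifurcate words over $\mathcal{A}$ arranged as a rooted tree in which the children (descendants) of a word $W$ are single-letter extensions of $W$ at pairwise different positions; thus a word of length $n$ has at most $n+1$ children. A bifurcate tree is complete if every word of length $n$ in it has exactly $n+1$ children (one extension at each position $0,\dots,n$); such a tree is necessarily infinite. *)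

(* Defs.v *)
From mathcomp Require Import all_boot.
Set Implicit Arguments. Unset Strict Implicit. Unset Printing Implicit Defensive.

Definition square_free (A : Type) (w : seq A) : Prop :=
  forall u X v : seq A, w = u ++ X ++ X ++ v -> X = [::].

Definition extension (A : Type) (w : seq A) (i : nat) (x : A) : seq A :=
  take i w ++ x :: drop i w.

Definition bifurcate (A : Type) (w : seq A) : Prop :=
  square_free w /\
  forall i, i <= size w -> exists x : A, square_free (extension w i x).

(* A complete tree rooted at [root] is encoded as a labelling [T] of
   addresses (sequences of positions) by words. The address [p] is a node
   iff its j-th entry is at most [size root + j] (the word at depth j has
   length [size root + j], so its children are at positions 0..size root + j). *)
Definition valid_address (n0 : nat) (p : seq nat) : bool :=
  all (fun j => nth 0 p j <= n0 + j) (iota 0 (size p)).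

Definition complete_bifurcate_tree (A : Type) (T : seq nat -> seq A) : Prop :=
  forall p, valid_address (size (T [::])) p ->
    bifurcate (T p) /\
    forall i, i <= size (T p) ->
      exists x : A, T (rcons p i) = extension (T p) i x.

(* Main.v *)
Require Import Defs.
From mathcomp Require Import all_boot.
From Stdlib Require Import ZArith Lia.
From mathcomp Require Import all_boot zify.

Open Scope Z_scope.

Definition bq (r : Z) : bool := (r =? 1) || (r =? 2).
Fixpoint Tf (n : nat) (z : Z) : bool :=
  match n with
  | O => z <? 0
  | S n' => if (z =? 0) || (z =? -1) then z <? 0 else xorb (bq (z mod 4)) (Tf n' (z / 4))
  end.
Definition TM (z : Z) : bool := Tf (Z.to_nat (Z.abs z)) z.

Lemma abs_div4 z : z <> 0 -> z <> -1 -> Z.abs (z / 4) + 1 <= Z.abs z.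
Proof. intros H1 H2. Z.div_mod_to_equations. lia. Qed.

Lemma Tf_stable (n m : nat) z : Z.abs z <= Z.of_nat n -> Z.abs z <= Z.of_nat m -> Tf n z = Tf m z.
Proof.
  elim: n m z => [|n IH] [|m] z /= H1 H2 //.
  - have -> : z = 0 by lia. by [].
  - have -> : z = 0 by lia. by [].
  - case E: ((z =? 0) || (z =? -1)) => //. f_equal. apply: IH.
    + have := abs_div4 z. lia.
    + have := abs_div4 z. lia.
Qed.

Lemma TM_unfold z : TM z = if (z =? 0) || (z =? -1) then z <? 0 else xorb (bq (z mod 4)) (TM (z / 4)).
Proof.
  rewrite /TM. case E: ((z =? 0) || (z =? -1)).
  - move: E => /orP [/Z.eqb_spec -> | /Z.eqb_spec ->] //.
  - have H1 : z <> 0 by move=> h; move: E; rewrite h.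
    have H2 : z <> -1 by move=> h; move: E; rewrite h.
    have [n Hn] : exists n, Z.to_nat (Z.abs z) = S n.
    { exists (Z.to_nat (Z.abs z) - 1)%nat. lia. }
    rewrite Hn /= E. f_equal. apply: Tf_stable; have := abs_div4 z; lia.
Qed.

Lemma TM4 k j : 0 <= j < 4 -> TM (4*k+j) = xorb (bq j) (TM k).
Proof.
  move=> Hj. rewrite TM_unfold.
  case E: ((4 * k + j =? 0) || (4 * k + j =? -1)).
  - move: E => /orP [/Z.eqb_spec h | /Z.eqb_spec h].
    + have -> : k = 0 by lia. have -> : j = 0 by lia. by vm_compute.
    + have -> : k = -1 by lia. have -> : j = 3 by lia. by vm_compute.
  - have -> : (4*k+j) mod 4 = j by Z.div_mod_to_equations; lia.
    have -> : (4*k+j) / 4 = k by Z.div_mod_to_equations; lia.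
    by [].
Qed.

Definition Good (X : Z -> bool) := forall k, X (2*k+1) = negb (X (2*k)).

Lemma TM_good : Good TM.
Proof.
  move=> k. destruct (Z.Even_or_Odd k) as [[a ->]|[a ->]].
  - rewrite (_ : 2*(2*a)+1 = 4*a+1); last lia.
    rewrite (_ : 2*(2*a) = 4*a+0); last lia.
    rewrite !TM4; try lia. by [].
  - rewrite (_ : 2*(2*a+1)+1 = 4*a+3); last lia.
    rewrite (_ : 2*(2*a+1) = 4*a+2); last lia.
    rewrite !TM4; try lia. by case: (TM a).
Qed.

Definition UM (k : Z) := TM (2*k).

Lemma UM_good : Good UM.
Proof.
  move=> k. rewrite /UM.
  rewrite (_ : 2*(2*k+1) = 4*k+2); last lia.
  rewrite (_ : 2*(2*k) = 4*k+0); last lia.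
  rewrite !TM4; try lia. by case: (TM k).
Qed.

Definition WM (b : bool) := if b then TM else UM.

Lemma WM_good b : Good (WM b).
Proof. case: b; [exact: TM_good | exact: UM_good]. Qed.

Lemma WM_double b k : WM b (2*k) = WM (negb b) k.
Proof.
  case: b => //=. rewrite /UM. rewrite (_ : 2*(2*k) = 4*k+0); last lia.
  rewrite TM4; last lia. by [].
Qed.

Lemma no3 X : Good X -> forall i, X i = X (i+1) -> X (i+1) = X (i+2) -> False.
Proof.
  move=> G i. destruct (Z.Even_or_Odd i) as [[a ->]|[a ->]].
  - rewrite G. by case: (X (2*a)).
  - rewrite (_ : 2*a+1+1 = 2*(a+1)); last lia.
    rewrite (_ : 2*a+1+2 = 2*(a+1)+1); last lia.
    rewrite (G (a+1)) => _. by case: (X (2*(a+1))).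
Qed.

Lemma no_overlap (n : nat) : forall (b : bool) (i p : Z), 0 < p -> p <= Z.of_nat n ->
  ~ (forall j, i <= j <= i + p -> WM b j = WM b (j + p)).
Proof.
  elim: n => [|n IH] b i p Hp Hpn E; first lia.
  set X := WM b in E *. have G : Good X by exact: WM_good.
  have XE : forall u v, u = v -> X u = X v by move=> u v ->.
  destruct (Z.Even_or_Odd p) as [[q Hq]|[c Hc]].
  -
    destruct (Z.Even_or_Odd i) as [[a Ha]|[a Ha]].
    + apply: (IH (negb b) a q); try lia.
      move=> k Hk.
      rewrite -!WM_double. rewrite -/X.
      have := E (2*k). rewrite (_ : 2*k+p = 2*(k+q)); last lia. apply; lia.
    + apply: (IH (negb b) a q); try lia.
      move=> k Hk.
      rewrite -!WM_double. rewrite -/X.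
      have := E (2*k+1). rewrite (_ : 2*k+1+p = 2*(k+q)+1); last lia.
      rewrite !G. move=> h. apply: negb_inj. apply: h. lia.
  -
    have P2 : forall j, i+1 <= j <= i+p-1 -> X (j-1) = X (j+1).
    { move=> j Hj. destruct (Z.Even_or_Odd j) as [[a Ha]|[a Ha]].
      - have e1 := E j ltac:(lia). have e2 := E (j-1) ltac:(lia).
        have g1 := G a. have g2 := G (a+c).
        rewrite -Ha in g1.
        rewrite (_ : 2*(a+c)+1 = j+p) in g2; last lia.
        rewrite (_ : 2*(a+c) = j-1+p) in g2; last lia.
        by rewrite e2 g1 e1 g2 negbK.
      - have e1 := E j ltac:(lia). have e2 := E (j+1) ltac:(lia).
        have g1 := G a. have g2 := G (a+c+1).
        rewrite (_ : 2*a+1 = j) in g1; last lia.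
        rewrite (_ : 2*a = j-1) in g1; last lia.
        rewrite (_ : 2*(a+c+1)+1 = j+1+p) in g2; last lia.
        rewrite (_ : 2*(a+c+1) = j+p) in g2; last lia.
        by rewrite e2 g2 -e1 g1 negbK. }
    have chain : forall t : nat, i + 1 + 2 * Z.of_nat t <= i + p -> X (i+1+2*Z.of_nat t) = X (i+1).
    { elim=> [|t IHt] Ht; first by rewrite (_ : i+1+2*Z.of_nat 0 = i+1); last lia.
      rewrite -IHt; last lia.
      have := P2 (i+1+2*Z.of_nat t + 1) ltac:(lia).
      rewrite (_ : i + 1 + 2 * Z.of_nat t + 1 - 1 = i+1+2*Z.of_nat t); last lia.
      rewrite (_ : i + 1 + 2 * Z.of_nat t + 1 + 1 = i + 1 + 2 * Z.of_nat t.+1); last lia.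
      by move=> ->. }
    have hp : p = 1 \/ 3 <= p by lia.
    case: hp => [hp1|hp3].
    + apply: (@no3 X G i).
      * have := E i ltac:(lia). by rewrite hp1.
      * have := E (i+1) ltac:(lia). rewrite hp1. rewrite (_ : i+1+1 = i+2); last lia. by [].
    + have c1 := chain (Z.to_nat c) ltac:(lia).
      rewrite (_ : i + 1 + 2 * Z.of_nat (Z.to_nat c) = i + p) in c1; last lia.
      have e0 := E i ltac:(lia).
      have p2 := P2 (i+1) ltac:(lia).
      rewrite (_ : i+1-1 = i) in p2; last lia.
      rewrite (_ : i+1+1 = i+2) in p2; last lia.
      apply: (@no3 X G i).
      * by rewrite e0 c1.
      * by rewrite -p2 e0 c1.
Qed.

Lemma TM_overlap_free i p : 0 < p -> ~ (forall j, i <= j <= i + p -> TM j = TM (j + p)).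
Proof. move=> Hp. exact: (no_overlap (Z.to_nat p) true i p Hp ltac:(lia)). Qed.
Definition th (z : Z) : nat := if TM z == TM (z+1) then 1%N else if TM z then 0%N else 2%N.

Lemma th_le2 z : (th z <= 2)%N.
Proof. rewrite /th. by case: (TM z == TM (z+1)); case: (TM z). Qed.

Lemma th_step j R : th j = th (j+R) ->
  (TM (j+R) = TM j <-> TM (j+1+R) = TM (j+1)).
Proof.
  rewrite /th (_ : (j+R+1 = j+1+R)); last lia.
  case: (TM j); case: (TM (j+1)); case: (TM (j+R)); case: (TM (j+1+R)) => //=.
Qed.

Lemma th_base j R : th j = th (j+R) -> TM j <> TM (j+1) -> TM (j+R) = TM j.
Proof.
  rewrite /th (_ : (j+R+1 = j+1+R)); last lia.
  case: (TM j); case: (TM (j+1)); case: (TM (j+R)); case: (TM (j+1+R)) => //=.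
Qed.

Lemma th_sqfree z0 (r : nat) : (0 < r)%N ->
  ~ (forall y : nat, (y < r)%N -> th (z0 + Z.of_nat y) = th (z0 + Z.of_nat y + Z.of_nat r)).
Proof.
  move=> Hr H. set R := Z.of_nat r.
  pose P (y : nat) := TM (z0 + Z.of_nat y + R) = TM (z0 + Z.of_nat y).
  have step : forall y, (y < r)%N -> (P y <-> P y.+1).
  { move=> y Hy. rewrite /P. have := th_step (z0 + Z.of_nat y) R (H y Hy).
    rewrite (_ : z0 + Z.of_nat y.+1 = z0 + Z.of_nat y + 1); last lia. by []. }
  have base : exists y0, (y0 <= r)%N /\ P y0.
  { have : (forall y, (y < r)%N -> TM (z0 + Z.of_nat y) = TM (z0 + Z.of_nat y + 1)) \/
           (exists y, (y < r)%N /\ TM (z0 + Z.of_nat y) <> TM (z0 + Z.of_nat y + 1)).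
    { elim: (r) => [|n [IH|IH]]; first by left.
      - case E: (TM (z0 + Z.of_nat n) == TM (z0 + Z.of_nat n + 1)).
        + left=> y Hy. case: (ltnP y n) => Hyn; first exact: IH.
          have -> : y = n by lia. exact/eqP.
        + right; exists n; split; first by []. by move/eqP; rewrite E.
      - right. case: IH => y [Hy Hne]. exists y; split; [lia | by []]. }
    case=> [Hall | [y [Hy Hne]]].
    - exists 0%N; split; first by []. rewrite /P.
      have : forall y, (y <= r)%N -> TM (z0 + Z.of_nat y) = TM z0.
      { elim=> [|y IHy] Hy; first by rewrite (_ : z0 + Z.of_nat 0 = z0); last lia.
        rewrite -IHy; last lia. rewrite (_ : z0 + Z.of_nat y.+1 = z0 + Z.of_nat y + 1); last lia.
        symmetry. apply: Hall. lia. }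
      move=> h. have := h r (leqnn r). rewrite (_ : z0 + Z.of_nat 0 + R = z0 + Z.of_nat r); last lia.
      rewrite (_ : z0 + Z.of_nat 0 = z0); last lia. by [].
    - exists y; split; first lia. rewrite /P. apply: th_base; first exact: H.
      exact: Hne. }
  case: base => y0 [Hy0 P0].
  have fwd : forall d, (y0 + d <= r)%N -> P (y0 + d)%N.
  { elim=> [|d IHd] Hd; first by rewrite addn0.
    rewrite addnS. apply/(step (y0 + d)%N); first lia. apply: IHd; lia. }
  have bwd : forall d, (d <= y0)%N -> P (y0 - d)%N.
  { elim=> [|d IHd] Hd; first by rewrite subn0.
    apply/(step (y0 - d.+1)%N); first lia.
    rewrite (_ : (y0 - d.+1).+1 = y0 - d)%N; last lia. apply: IHd; lia. }
  have all : forall y, (y <= r)%N -> P y.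
  { move=> y Hy. case: (leqP y0 y) => h.
    - have := fwd (y - y0)%N ltac:(lia). by rewrite subnKC.
    - have := bwd (y0 - y)%N ltac:(lia). rewrite (_ : (y0 - (y0 - y)) = y)%N; last lia. by []. }
  apply: (TM_overlap_free z0 R); first lia.
  move=> j Hj. have := all (Z.to_nat (j - z0)) ltac:(lia). rewrite /P.
  rewrite (_ : z0 + Z.of_nat (Z.to_nat (j - z0)) = j); last lia. by move=> ->.
Qed.

Lemma th_neq z : th z <> th (z+1).
Proof.
  move=> h. apply: (th_sqfree z 1%N) => //= y Hy. have -> : y = 0%N by lia.
  rewrite (_ : z + Z.of_nat 0 + Z.of_nat 1 = z+1); last lia.
  rewrite (_ : z + Z.of_nat 0 = z); last lia. exact: h.
Qed.
Close Scope Z_scope.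

Definition F (l : nat) : nat :=
  if l %% 3 == 0 then 3 else th (Z.of_nat (2 * (l %/ 3) + l %% 3) - 1)%Z.

Lemma F0 q : F (3 * q) = 3.
Proof. rewrite /F (_ : (3 * q) %% 3 = 0); last lia. by []. Qed.
Lemma F_nz l : l %% 3 != 0 -> F l = th (Z.of_nat (2 * (l %/ 3) + l %% 3) - 1)%Z.
Proof. rewrite /F => h. by rewrite (negbTE h). Qed.
Lemma F1 q : F (3 * q + 1) = th (Z.of_nat (2 * q)).
Proof.
  rewrite F_nz; last by apply/eqP; lia.
  congr (th _). rewrite (_ : (3 * q + 1) %/ 3 = q); last lia.
  rewrite (_ : (3 * q + 1) %% 3 = 1); last lia. lia.
Qed.
Lemma F2 q : F (3 * q + 2) = th (Z.of_nat (2 * q) + 1)%Z.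
Proof.
  rewrite F_nz; last by apply/eqP; lia.
  congr (th _). rewrite (_ : (3 * q + 2) %/ 3 = q); last lia.
  rewrite (_ : (3 * q + 2) %% 3 = 2); last lia. lia.
Qed.

Lemma F_cases l : (exists q, l = 3 * q) \/ (exists q, l = 3 * q + 1) \/ (exists q, l = 3 * q + 2).
Proof.
  have : l %% 3 = 0 \/ l %% 3 = 1 \/ l %% 3 = 2 by lia.
  case=> [h|[h|h]]; [left|right;left|right;right]; exists (l %/ 3); lia.
Qed.

Lemma F_le3 l : F l <= 3.
Proof. rewrite /F. case: (_ == _) => //. have := th_le2 (Z.of_nat (2 * (l %/ 3) + l %% 3) - 1)%Z. lia. Qed.

Lemma F_is3 l : F l = 3 -> l %% 3 = 0.
Proof.
  rewrite /F. case: eqP => // _ h.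
  have := th_le2 (Z.of_nat (2 * (l %/ 3) + l %% 3) - 1)%Z. lia.
Qed.

Lemma Fn1 l : F l <> F l.+1.
Proof.
  case: (F_cases l) => [[q ->]|[[q ->]|[q ->]]].
  - rewrite F0 (_ : (3 * q).+1 = 3 * q + 1); last lia. rewrite F1. have := th_le2 (Z.of_nat (2 * q)). lia.
  - rewrite F1 (_ : (3 * q + 1).+1 = 3 * q + 2); last lia. rewrite F2.
    have := th_neq (Z.of_nat (2 * q)). by [].
  - rewrite F2 (_ : (3 * q + 2).+1 = 3 * q.+1); last lia. rewrite F0.
    have := th_le2 (Z.of_nat (2 * q) + 1)%Z. lia.
Qed.

Lemma Fn2 l : F l <> F l.+2.
Proof.
  case: (F_cases l) => [[q ->]|[[q ->]|[q ->]]].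
  - rewrite F0 (_ : (3 * q).+2 = 3 * q + 2); last lia. rewrite F2.
    have := th_le2 (Z.of_nat (2 * q) + 1)%Z. lia.
  - rewrite F1 (_ : (3 * q + 1).+2 = 3 * q.+1); last lia. rewrite F0.
    have := th_le2 (Z.of_nat (2 * q)). lia.
  - rewrite F2 (_ : (3 * q + 2).+2 = 3 * q.+1 + 1); last lia. rewrite F1.
    rewrite (_ : Z.of_nat (2 * q.+1) = (Z.of_nat (2 * q) + 1 + 1)%Z); last lia.
    exact: th_neq.
Qed.

Lemma Fnear x y : x <> y -> x <= y + 2 -> y <= x + 2 -> F x <> F y.
Proof.
  move=> h1 h2 h3.
  have : y = x.+1 \/ y = x.+2 \/ x = y.+1 \/ x = y.+2 by lia.
  case=> [->|[->|[->|->]]]; [exact: Fn1 | exact: Fn2 | move=> h; exact: (Fn1 y) (esym h) | move=> h; exact: (Fn2 y) (esym h)].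
Qed.

Lemma F_inv Y : F (3 * (Y %/ 2) + Y %% 2 + 1) = th (Z.of_nat Y).
Proof.
  have : Y %% 2 = 0 \/ Y %% 2 = 1 by lia.
  case=> h; rewrite h.
  - rewrite addn0 F1. congr (th _). lia.
  - rewrite (_ : 3 * (Y %/ 2) + 1 + 1 = 3 * (Y %/ 2) + 2); last lia. rewrite F2. congr (th _). lia.
Qed.

Lemma F_sqfree l0 d : 0 < d -> ~ (forall s, s < d -> F (l0 + s) = F (l0 + d + s)).
Proof.
  move=> Hd H.
  have : d = 1 \/ d = 2 \/ 3 <= d by lia.
  case=> [hd|[hd|hd]].
  - have := H 0 ltac:(lia). rewrite hd !addn0 addn1. exact: Fn1.
  - have := H 0 ltac:(lia). rewrite hd !addn0 (_ : l0 + 2 = l0.+2); last lia. exact: Fn2.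
  - set s0 := (3 - l0 %% 3) %% 3.
    have Hs0 : s0 < d by rewrite /s0; lia.
    have e1 : F (l0 + s0) = 3 by rewrite (_ : l0 + s0 = 3 * ((l0 + s0) %/ 3)) ?F0 //; rewrite /s0; lia.
    have e2 := H s0 Hs0. rewrite e1 in e2.
    have hm := F_is3 _ (esym e2).
    have [e He] : exists e, d = 3 * e by exists (d %/ 3); rewrite /s0 in hm; lia.
    set Z1 := 2 * (l0 %/ 3) + (if l0 %% 3 == 2 then 1 else 0).
    apply: (th_sqfree (Z.of_nat Z1) (2 * e)); first lia.
    move=> y Hy.
    set Y := Z1 + y.
    set x := 3 * (Y %/ 2) + Y %% 2 + 1.
    have Hx1 : l0 <= x.
    { rewrite /x /Y /Z1. case: eqP => h; lia. }
    have Hx2 : x < l0 + d.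
    { rewrite /x /Y /Z1. case: eqP => h; lia. }
    have := H (x - l0) ltac:(lia).
    rewrite (_ : l0 + (x - l0) = x); last lia.
    rewrite (_ : l0 + d + (x - l0) = 3 * ((Y + 2 * e) %/ 2) + (Y + 2 * e) %% 2 + 1); last first.
    { rewrite /x He. lia. }
    rewrite /x !F_inv. rewrite /Y.
    rewrite (_ : (Z.of_nat Z1 + Z.of_nat y)%Z = Z.of_nat (Z1 + y)); last lia.
    rewrite (_ : (Z.of_nat (Z1 + y) + Z.of_nat (2 * e))%Z = Z.of_nat (Z1 + y + 2 * e)); last lia.
    by [].
Qed.
Lemma nat_byc (a b : nat) : (a <> b -> False) -> a = b.
Proof. case: (eqVneq a b) => // /eqP h H. by case: (H h). Qed.

Definition adjw (w : nat -> nat) i := w i.+1 <= w i + 1 /\ w i <= w i.+1 + 1.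

Lemma ivt (w : nat -> nat) lo hi x : lo <= hi ->
  (forall i, lo <= i < hi -> adjw w i) ->
  (w lo <= x <= w hi \/ w hi <= x <= w lo) -> exists j, lo <= j <= hi /\ w j = x.
Proof.
  move=> Hlh. elim: hi Hlh => [|hi IH] Hlh Hadj Hx.
  - exists lo. split; first lia. have e : lo = 0 by lia. rewrite e in Hx *. lia.
  - case: (leqP lo hi) => Hl; last first.
    { exists hi.+1; split; first lia. have e : lo = hi.+1 by lia. rewrite e in Hx. lia. }
    have [A B] := Hadj hi ltac:(lia).
    case: (boolP (x == w hi.+1)) => [/eqP ->|Hne]; first by exists hi.+1; split; [lia|].
    have [j [Hj Hwj]] : exists j, lo <= j <= hi /\ w j = x.
    { apply: IH => //. move=> i Hi; apply: Hadj; lia.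
      move/eqP: Hne => Hne. lia. }
    exists j; split; [lia|exact Hwj].
Qed.

Section Walk.
Variable w : nat -> nat.
Variable m : nat.
Hypothesis Hm : 0 < m.
Hypothesis Hadj : forall i, i.+1 < 2 * m -> adjw w i.
Hypothesis HF : forall i, i < m -> F (w i) = F (w (i + m)).

Let Tm i := w (i + m) + w 0 = w m + w i.
Let Mm i := w (i + m) + w i = w m + w 0.

Lemma stay_stay n : n.+1 < m -> w n.+1 = w n -> w (n.+1 + m) = w (n + m).
Proof.
  move=> Hn e. have [A B] := Hadj (n + m) ltac:(lia).
  rewrite (_ : (n + m).+1 = n.+1 + m) in A B; last lia.
  have := HF n.+1 Hn. have := HF n ltac:(lia). rewrite e => h1 h2.
  rewrite h1 in h2. apply: nat_byc => hne.
  by apply: (Fnear (w (n+m)) (w (n.+1 + m))); lia.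
Qed.

Lemma dich n : n < m -> (forall i, i <= n -> Tm i) \/ (forall i, i <= n -> Mm i).
Proof.
  elim: n => [|n IH] Hn.
  - left=> i Hi. have -> : i = 0 by lia. by rewrite /Tm add0n.
  - have IHn := IH ltac:(lia).
    have [A B] := Hadj n ltac:(lia).
    have [C D] := Hadj (n + m) ltac:(lia).
    rewrite (_ : (n + m).+1 = n.+1 + m) in C D; last lia.
    case: (boolP (w n.+1 == w n)) => [/eqP e|ne].
    { have e' := stay_stay n Hn e.
      case: IHn => h; [left|right] => i Hi; case: (leqP i n) => Hin; try exact: h.
      - have -> : i = n.+1 by lia. have := h n (leqnn n). rewrite /Tm. lia.
      - have -> : i = n.+1 by lia. have := h n (leqnn n). rewrite /Mm. lia. }
    move/eqP: ne => ne.
    have ne' : w (n.+1 + m) <> w (n + m).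
    { move=> e'. apply: (Fnear (w n) (w n.+1)); try lia.
      rewrite HF; last lia. rewrite (HF n.+1) //. by rewrite e'. }
    case: (boolP (has (fun j => w j != w n) (iota 0 n.+1))) => [Hhas|Hnot].
    +
      have Pex : exists j, (j <= n) && (w j != w n).
      { move/hasP: Hhas => [j Hj Hw]. exists j. rewrite mem_iota in Hj. apply/andP; split; [lia|exact Hw]. }
      have Pbd : forall j, (j <= n) && (w j != w n) -> j <= n by move=> j /andP [].
      case: (ex_maxnP Pex Pbd) => j /andP [Hjn Hwj] Hmax.
      move/eqP: Hwj => Hwj.
      have Hafter : forall k, j < k <= n -> w k = w n.
      { move=> k Hk. apply: nat_byc => hne.
        have := Hmax k. move/eqP: hne => ->. rewrite andbT. move=> h. have := h ltac:(lia). lia. }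
      have Hjn' : j < n.
      { case: (ltnP j n) => // h. have e : j = n by lia. by rewrite e in Hwj. }
      have wj1 := Hafter j.+1 ltac:(lia).
      have [E1 E2] := Hadj j ltac:(lia).
      have Fj := HF j ltac:(lia).
      have Fn1 := HF n.+1 Hn.
      case: IHn => h; [left|right] => i Hi; case: (leqP i n) => Hin; try exact: h;
        have -> : i = n.+1 by lia.
      * have hj := h j Hjn. have hn := h n (leqnn n). rewrite /Tm in hj hn *.
        case: (boolP (w (n.+1 + m) == w (j + m))) => [/eqP e2|ne2].
        -- have : w n.+1 = w j.
           { apply: nat_byc => hne. apply: (Fnear (w n.+1) (w j)); try lia.
             by rewrite Fn1 Fj e2. }
           lia.
        -- move/eqP: ne2 => ne2.
           have : w n.+1 <> w j.
           { move=> hh. apply: (Fnear (w (n.+1 + m)) (w (j + m))); try lia.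
             by rewrite -Fn1 -Fj hh. }
           lia.
      * have hj := h j Hjn. have hn := h n (leqnn n). rewrite /Mm in hj hn *.
        case: (boolP (w (n.+1 + m) == w (j + m))) => [/eqP e2|ne2].
        -- have : w n.+1 = w j.
           { apply: nat_byc => hne. apply: (Fnear (w n.+1) (w j)); try lia.
             by rewrite Fn1 Fj e2. }
           lia.
        -- move/eqP: ne2 => ne2.
           have : w n.+1 <> w j.
           { move=> hh. apply: (Fnear (w (n.+1 + m)) (w (j + m))); try lia.
             by rewrite -Fn1 -Fj hh. }
           lia.
    +
      have Hc : forall j, j <= n -> w j = w n.
      { move=> j Hj. apply: nat_byc => hne. move/negP: Hnot; apply.
        apply/hasP. exists j; first by rewrite mem_iota; lia. exact/eqP. }
      have Hc0 := Hc 0 ltac:(lia).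
      have Hbc : forall j, j <= n -> w (j + m) = w (n + m).
      { move=> j Hj. have := Hc j Hj. case: IHn => h; have := h j Hj; have := h n (leqnn n);
        rewrite /Tm /Mm; lia. }
      case: (boolP (w (n.+1 + m) + w n == w (n + m) + w n.+1)) => [/eqP e|ne2].
      * left=> i Hi. rewrite /Tm. case: (leqP i n) => Hin.
        -- have := Hbc i Hin. have := Hbc 0 ltac:(lia); rewrite add0n. have := Hc i Hin. lia.
        -- have -> : i = n.+1 by lia. have := Hbc 0 ltac:(lia); rewrite add0n. lia.
      * move/eqP: ne2 => ne2. right=> i Hi. rewrite /Mm. case: (leqP i n) => Hin.
        -- have := Hbc i Hin. have := Hbc 0 ltac:(lia); rewrite add0n. have := Hc i Hin. lia.
        -- have -> : i = n.+1 by lia. have := Hbc 0 ltac:(lia); rewrite add0n. lia.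
Qed.

Lemma walk_match i : i < m -> w i = w (i + m).
Proof.
  move=> Hi.
  have Ha : forall i, i < 2 * m - 1 -> adjw w i by move=> k Hk; apply: Hadj; lia.
  case: (dich (m.-1) ltac:(lia)) => h.
  -
    have T' : forall j, j < m -> w (j + m) + w 0 = w m + w j by move=> j Hj; apply: h; lia.
    case: (ltngtP (w 0) (w m)) => c.
    + exfalso. apply: (F_sqfree (w 0) (w m - w 0)); first lia.
      move=> s Hs.
      have [j [Hj Hwj]] : exists j, 0 <= j <= m /\ w j = w 0 + s.
      { apply: ivt; [lia| move=> k Hk; apply: Ha; lia| lia]. }
      have Hjm : j < m.
      { case: (ltnP j m) => // hj. exfalso. have e : j = m by lia. rewrite e in Hwj. lia. }
      have := HF j Hjm. have := T' j Hjm. rewrite Hwj => e1.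
      rewrite (_ : w 0 + (w m - w 0) + s = w (j + m)); last lia. by [].
    + exfalso.
      have key : forall s, s < w 0 - w m -> exists j, j < m /\ w j = w m + 1 + s /\ w (j + m) + w 0 = w m + w j.
      { move=> s Hs.
        have [j [Hj Hwj]] : exists j, 0 <= j <= m /\ w j = w m + 1 + s.
        { apply: ivt; [lia| move=> k Hk; apply: Ha; lia| lia]. }
        have Hjm : j < m.
        { case: (ltnP j m) => // hj. exfalso. have e : j = m by lia. rewrite e in Hwj. lia. }
        exists j; split; first exact Hjm. split; first exact Hwj. exact: T'. }
      have Hb : w 0 <= 2 * w m + 1.
      { case: (key 0 ltac:(lia)) => j [_ [Hwj e1]]. lia. }
      apply: (F_sqfree (w m + 1 - (w 0 - w m)) (w 0 - w m)); first lia.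
      move=> s Hs. case: (key s Hs) => j [Hjm [Hwj e1]].
      have := HF j Hjm. rewrite Hwj.
      rewrite (_ : w m + 1 - (w 0 - w m) + (w 0 - w m) + s = w m + 1 + s); last lia.
      rewrite (_ : w m + 1 - (w 0 - w m) + s = w (j + m)); last lia. by move=> ->.
    + have := T' i Hi. lia.
  -
    have M' : forall j, j < m -> w (j + m) + w j = w m + w 0 by move=> j Hj; apply: h; lia.
    set K := w m + w 0.
    apply: nat_byc => hne.
    have Mi := M' i Hi.
    have HFK : forall j, i <= j <= i + m -> F (w j) = F (K - w j).
    { move=> j Hj. case: (ltnP j m) => hj.
      - rewrite HF //. have := M' j hj. by move=> e; congr F; lia.
      - have hj' : j - m < m by lia. have := HF (j - m) hj'. rewrite (_ : j - m + m = j); last lia.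
        move=> <-. have := M' (j - m) hj'. rewrite (_ : j - m + m = j); last lia. move=> e. congr F. lia. }
    set x1 := (K - 1) %/ 2.
    have [j [Hj Hwj]] : exists j, i <= j <= i + m /\ w j = x1.
    { apply: ivt; [lia| move=> k Hk; apply: Ha; lia| rewrite /x1; lia]. }
    have := HFK j Hj. rewrite Hwj. apply: Fnear; rewrite /x1; lia.
Qed.

End Walk.
Section Core.
Variables (L : nat -> nat) (Zf : nat -> Z) (m : nat).
Hypothesis Hm : 0 < m.
Hypothesis HL : forall i, i < m -> L i = L (i + m).
Hypothesis Hth : forall i, i < m -> th (Zf i) = th (Zf (i + m)).
Hypothesis HI2 : forall i j, i < j < 2 * m -> L i = L j ->
  (forall q, i < q < j -> L j < L q) -> Zf j = (Zf i + 1)%Z.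

Lemma core : False.
Proof.
  have Pex : exists n, has (fun i => L i == n) (iota 0 (2 * m)).
  { exists (L 0). apply/hasP. exists 0; last by []. rewrite mem_iota. lia. }
  case: (ex_minnP Pex) => t /hasP [i0 Hi0 /eqP Li0] Hmin.
  rewrite mem_iota in Hi0.
  have Hge : forall i, i < 2 * m -> t <= L i.
  { move=> i Hi. apply: Hmin. apply/hasP. exists i; last by []. rewrite mem_iota. lia. }
  pose cnt i := count (fun j => L j == t) (iota 0 i).
  have cntS : forall i, cnt i.+1 = cnt i + (L i == t).
  { move=> i. rewrite /cnt -addn1 iotaD count_cat /=. by rewrite add0n addn0. }
  have cnt_mono : forall i j, i <= j -> cnt i <= cnt j.
  { move=> i j Hij. rewrite -(subnKC Hij). elim: (j - i) => [|d IH]; first by rewrite addn0.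
    rewrite addnS cntS. lia. }
  have cnt_strict : forall i j, i < j -> L i = t -> cnt i < cnt j.
  { move=> i j Hij Lt. have := cnt_mono i.+1 j Hij. rewrite cntS Lt eqxx. lia. }
  have cnt_le : forall i, cnt i <= i.
  { elim=> [|i IH]; first by []. rewrite cntS. case: (_ == _); lia. }
  have B : forall i2 i1, i1 <= i2 < 2 * m -> L i1 = t -> L i2 = t ->
      Zf i2 = (Zf i1 + Z.of_nat (cnt i2 - cnt i1))%Z.
  { elim/ltn_ind=> i2 IH i1 Hi Li1 Li2.
    case: (ltngtP i1 i2) => c; [|lia|]; last first.
    { rewrite c subnn. lia. }
    have Pex2 : exists j, (i1 <= j < i2) && (L j == t).
    { exists i1. apply/andP; split; [lia|apply/eqP; exact Li1]. }
    have Pbd : forall j, (i1 <= j < i2) && (L j == t) -> j <= i2.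
    { move=> j /andP [h _]. lia. }
    case: (ex_maxnP Pex2 Pbd) => p /andP [Hp /eqP Lp] Hmaxp.
    have Hbetween : forall q, p < q < i2 -> t < L q.
    { move=> q Hq. have h1 := Hge q ltac:(lia).
      case: (boolP (L q == t)) => [/eqP e|ne]; last by move/eqP: ne; lia.
      exfalso. have := Hmaxp q. rewrite e eqxx andbT => h. have := h ltac:(lia). lia. }
    have e1 : Zf i2 = (Zf p + 1)%Z.
    { apply: HI2; first lia. by rewrite Lp Li2. move=> q Hq. rewrite Li2. exact: Hbetween. }
    have e2 : cnt i2 = cnt p + 1.
    { have -> : i2 = p + (i2 - p) by lia. rewrite /cnt iotaD count_cat add0n.
      have -> : i2 - p = (i2 - p).-1.+1 by lia.
      rewrite /= Lp eqxx.
      have h0 : count (fun j => L j == t) (iota p.+1 (i2 - p).-1) = 0.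
      { rewrite (eq_in_count (a2 := pred0)) ?count_pred0 //.
        move=> q. rewrite mem_iota => Hq /=. apply/negbTE/negP => /eqP e. have := Hbetween q ltac:(lia). lia. }
      rewrite h0. lia. }
    have IHp := IH p ltac:(lia) i1 ltac:(lia) Li1 Lp.
    have := cnt_mono i1 p ltac:(lia). lia. }
  set r := cnt m.
  have cnt_shift : forall i, i <= m -> cnt (m + i) = r + cnt i.
  { move=> i Hi. rewrite /cnt iotaD count_cat add0n. congr (_ + _).
    rewrite -{1}[m]addn0 iotaDl count_map. apply: eq_in_count.
    move=> q. rewrite mem_iota => Hq /=. rewrite addnC -HL //. lia. }
  have Hr : 0 < r.
  { rewrite /r /cnt -has_count. apply/hasP.
    case: (ltnP i0 m) => h.
    - exists i0; first by rewrite mem_iota; lia. by apply/eqP.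
    - exists (i0 - m); first by rewrite mem_iota; lia. apply/eqP. rewrite HL; last lia.
      by rewrite subnK. }
  have surj : forall y, y < r -> exists i, i < m /\ L i = t /\ cnt i = y.
  { move=> y Hy.
    have Pex3 : exists i, (i <= m) && (cnt i <= y).
    { exists 0. apply/andP; split; [lia| by []]. }
    have Pbd3 : forall i, (i <= m) && (cnt i <= y) -> i <= m by move=> i /andP [].
    case: (ex_maxnP Pex3 Pbd3) => i /andP [Him Hci] Hmaxi.
    have Him' : i < m.
    { case: (ltnP i m) => // h. have e : i = m by lia. rewrite e /r in Hci Hy. lia. }
    have Hnext : y < cnt i.+1.
    { case: (ltnP y (cnt i.+1)) => // h. have := Hmaxi i.+1. rewrite h andbT. move=> hh.
      have := hh ltac:(lia). lia. }
    move: Hnext. rewrite cntS. case: eqP => e h; last lia.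
    exists i. split; first exact Him'. split; first exact e. lia. }
  have [i00 [Hi00 [Li00 ci00]]] := surj 0 Hr.
  apply: (th_sqfree (Zf i00) r Hr) => y Hy.
  have [iy [Hiy [Liy ciy]]] := surj y Hy.
  have Hle : i00 <= iy.
  { case: (leqP i00 iy) => // h. have := cnt_strict iy i00 h Liy. lia. }
  have E1 := B iy i00 ltac:(lia) Li00 Liy.
  have Liym : L (iy + m) = t by rewrite -HL.
  have E2 := B (iy + m) iy ltac:(lia) Liy Liym.
  have cs := cnt_shift iy ltac:(lia). rewrite addnC in cs.
  rewrite cs ciy ci00 in E1 E2.
  have := Hth iy Hiy. rewrite E2 E1.
  rewrite (_ : (Zf i00 + Z.of_nat (y - 0) + Z.of_nat (r + y - y))%Z = (Zf i00 + Z.of_nat y + Z.of_nat r)%Z); last lia.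
  rewrite (_ : (Zf i00 + Z.of_nat (y - 0))%Z = (Zf i00 + Z.of_nat y)%Z); last lia.
  by [].
Qed.
End Core.
Definition E0 : nat * Z := (0, 0%Z).
Definition lay (s : seq (nat * Z)) i := (nth E0 s i).1.
Definition zz (s : seq (nat * Z)) i := (nth E0 s i).2.

Definition INV (s : seq (nat * Z)) :=
  (forall i, i.+1 < size s -> lay s i.+1 <= lay s i + 1 /\ lay s i <= lay s i.+1 + 1) /\
  (forall i j, i < j < size s -> lay s i = lay s j ->
     (forall k, i < k < j -> lay s j < lay s k) -> zz s j = (zz s i + 1)%Z).

Definition col (e : nat * Z) : nat := F e.1 * 3 + th e.2.
Definition colI (e : nat * Z) : 'I_12 := inord (col e).

Lemma col_lt e : col e < 12.
Proof. rewrite /col. have := F_le3 e.1. have := th_le2 e.2. lia. Qed.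

Lemma colI_eq e1 e2 : colI e1 = colI e2 -> F e1.1 = F e2.1 /\ th e1.2 = th e2.2.
Proof.
  move=> /(congr1 (@nat_of_ord 12)). rewrite /colI !inordK; try exact: col_lt.
  rewrite /col. have := th_le2 e1.2. have := th_le2 e2.2. move=> h1 h2 e. lia.
Qed.

Lemma nth_sq (T: Type) (d:T) u X v i : i < size X ->
  nth d (u ++ X ++ X ++ v) (size u + i) = nth d X i /\ nth d (u ++ X ++ X ++ v) (size u + (i + size X)) = nth d X i.
Proof.
  move=> Hi. split; rewrite !nth_cat; repeat (case: ltnP => ?); try lia; congr (nth _ _ _); lia.
Qed.

Theorem sqfree_inv s : INV s -> square_free (map colI s).
Proof.
  move=> [I1 I2] u X v E.
  case: (posnP (size X)) => [/eqP /nilP //|Hm].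
  exfalso.
  set k := size u. set m := size X.
  have Hsz : k + 2 * m <= size s.
  { have := congr1 size E. rewrite size_map !size_cat. lia. }
  have Hnth : forall i, i < m -> colI (nth E0 s (k + i)) = colI (nth E0 s (k + (i + m))).
  { move=> i Hi.
    rewrite -(nth_map E0 (colI E0) colI); last lia.
    rewrite -(nth_map E0 (colI E0) colI (n := k + (i + m))); last lia.
    rewrite E. have [-> ->] := nth_sq _ (colI E0) u X v i Hi. by []. }
  pose L i := lay s (k + i).
  pose Zf i := zz s (k + i).
  have HLw : forall i, i < m -> L i = L (i + m).
  { apply: (walk_match L m Hm).
    - move=> i Hi. rewrite /adjw /L (_ : k + i.+1 = (k + i).+1); last lia. apply: I1. lia.
    - move=> i Hi. have [h _] := colI_eq _ _ (Hnth i Hi). exact: h. }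
  apply: (core L Zf m Hm HLw).
  - move=> i Hi. have [_ h] := colI_eq _ _ (Hnth i Hi). exact: h.
  - move=> i j Hij Le Hb. rewrite /Zf. apply: I2; first lia.
    + exact: Le.
    + move=> q Hq. have := Hb (q - k) ltac:(lia). rewrite /L (_ : k + (q - k) = q); last lia. by [].
Qed.
Definition nl (s : seq (nat * Z)) (i : nat) : nat * Z :=
  if size s == 0 then (0, 0%Z)
  else if i == 0 then (lay s 0, (zz s 0 - 1)%Z)
  else if size s <= i then (lay s (size s).-1, (zz s (size s).-1 + 1)%Z)
  else if lay s i.-1 == lay s i then ((lay s i).+1, 0%Z)
  else if lay s i.-1 < lay s i then (lay s i, (zz s i - 1)%Z)
  else (lay s i.-1, (zz s i.-1 + 1)%Z).

Lemma size_ext (T : Type) (s : seq T) i x : i <= size s -> size (extension s i x) = (size s).+1.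
Proof. move=> Hi. rewrite /extension size_cat /= size_take size_drop. case: ltnP => h; lia. Qed.

Lemma nth_ext (T : Type) (d : T) (s : seq T) i x j : i <= size s ->
  nth d (extension s i x) j = if j < i then nth d s j else if j == i then x else nth d s j.-1.
Proof.
  move=> Hi. rewrite /extension nth_cat size_take.
  have -> : (if i < size s then i else size s) = i by case: ltnP => h; lia.
  case: ltnP => h1.
  - by rewrite nth_take.
  - case: eqP => h2.
    + by rewrite h2 subnn.
    + have -> : j - i = (j - i).-1.+1 by lia. rewrite /= nth_drop. congr (nth _ _ _). lia.
Qed.

Lemma ext_over (T : Type) (s : seq T) i x : size s <= i -> extension s i x = extension s (size s) x.
Proof. move=> h. by rewrite /extension take_oversize // drop_oversize // take_size drop_size. Qed.

Lemma nl_over s i : size s <= i -> nl s i = nl s (size s).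
Proof.
  move=> h. rewrite /nl. case: eqP => // hs.
  have -> : (i == 0) = false by apply/negbTE; lia.
  by rewrite h leqnn.
Qed.

Section Preserve.
Variable s : seq (nat * Z).
Hypothesis Hinv : INV s.
Variable i : nat.
Hypothesis Hi : i <= size s.
Let x := nl s i.

Lemma nlA : 0 < i -> x.1 <= lay s i.-1 + 1 /\ lay s i.-1 <= x.1 + 1.
Proof.
  move: Hinv => [I1 _] h. rewrite /x /nl.
  case: eqP => hs; first lia. case: eqP => hi; first lia.
  case: (leqP (size s) i) => hsi.
  - have -> : (size s).-1 = i.-1 by lia. simpl. lia.
  - have := I1 i.-1 ltac:(lia). rewrite (_ : i.-1.+1 = i); last lia. move=> [A B].
    case: eqP => e; first by simpl; lia.
    case: (ltnP (lay s i.-1) (lay s i)) => c /=; lia.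
Qed.

Lemma nlB : i < size s -> x.1 <= lay s i + 1 /\ lay s i <= x.1 + 1.
Proof.
  move: Hinv => [I1 _] h. rewrite /x /nl.
  case: eqP => hs; first lia. case: eqP => hi.
  - rewrite hi /=. lia.
  - case: (leqP (size s) i) => hsi; first lia.
    have := I1 i.-1 ltac:(lia). rewrite (_ : i.-1.+1 = i); last lia. move=> [A B].
    case: eqP => e; first by simpl; lia.
    case: (ltnP (lay s i.-1) (lay s i)) => c /=; lia.
Qed.

Lemma nlC : 0 < i -> x.1 = lay s i.-1 -> x.2 = (zz s i.-1 + 1)%Z.
Proof.
  move: Hinv => [I1 _] h. rewrite /x /nl.
  case: eqP => hs; first lia. case: eqP => hi; first lia.
  case: (leqP (size s) i) => hsi.
  - have -> : (size s).-1 = i.-1 by lia. by [].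
  - case: eqP => e /=; first lia.
    case: (ltnP (lay s i.-1) (lay s i)) => c /=; [lia|by []].
Qed.

Lemma nlD : i < size s -> x.1 = lay s i -> zz s i = (x.2 + 1)%Z.
Proof.
  move: Hinv => [I1 _] h. rewrite /x /nl.
  case: eqP => hs; first lia. case: eqP => hi.
  - rewrite hi /= => _. lia.
  - case: (leqP (size s) i) => hsi; first lia.
    case: eqP => e /=; first lia.
    case: (ltnP (lay s i.-1) (lay s i)) => c /= => e2; [lia|lia].
Qed.

Lemma nlE : 0 < i -> x.1 = lay s i.-1 \/ lay s i.-1 < x.1.
Proof.
  move: Hinv => [I1 _] h. rewrite /x /nl.
  case: eqP => hs; first lia. case: eqP => hi; first lia.
  case: (leqP (size s) i) => hsi.
  - have -> : (size s).-1 = i.-1 by lia. by left.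
  - have := I1 i.-1 ltac:(lia). rewrite (_ : i.-1.+1 = i); last lia. move=> [A B].
    case: eqP => e /=; first lia.
    case: (ltnP (lay s i.-1) (lay s i)) => c /=; lia.
Qed.

Lemma nlF : i < size s -> x.1 = lay s i \/ lay s i < x.1.
Proof.
  move: Hinv => [I1 _] h. rewrite /x /nl.
  case: eqP => hs; first lia. case: eqP => hi.
  - rewrite hi /=. by left.
  - case: (leqP (size s) i) => hsi; first lia.
    have := I1 i.-1 ltac:(lia). rewrite (_ : i.-1.+1 = i); last lia. move=> [A B].
    case: eqP => e /=; first lia.
    case: (ltnP (lay s i.-1) (lay s i)) => c /=; lia.
Qed.

Lemma INV_ext : INV (extension s i x).
Proof.
  move: (Hinv) => [I1 I2].
  have HA := nlA. have HB := nlB. have HC := nlC. have HD := nlD. have HE := nlE. have HF := nlF.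
  set s' := extension s i x.
  have Hs' : size s' = (size s).+1 by rewrite /s' size_ext.
  have Elt : forall j, j < i -> nth E0 s' j = nth E0 s j.
  { move=> j h. by rewrite /s' nth_ext // h. }
  have Eeq : nth E0 s' i = x.
  { by rewrite /s' nth_ext // ltnn eqxx. }
  have Egt : forall j, i < j -> nth E0 s' j = nth E0 s j.-1.
  { move=> j h. rewrite /s' nth_ext //. have -> : (j < i) = false by apply/negbTE; lia.
    have -> : (j == i) = false by apply/negbTE; lia. by []. }
  have Llt : forall j, j < i -> lay s' j = lay s j by move=> j h; rewrite /lay Elt.
  have Leq : lay s' i = x.1 by rewrite /lay Eeq.
  have Lgt : forall j, i < j -> lay s' j = lay s j.-1 by move=> j h; rewrite /lay Egt.
  have Zlt : forall j, j < i -> zz s' j = zz s j by move=> j h; rewrite /zz Elt.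
  have Zeq : zz s' i = x.2 by rewrite /zz Eeq.
  have Zgt : forall j, i < j -> zz s' j = zz s j.-1 by move=> j h; rewrite /zz Egt.
  split.
  - move=> j Hj. rewrite Hs' in Hj.
    have : j.+1 < i \/ j.+1 = i \/ j = i \/ i < j by lia.
    case=> [c|[c|[c|c]]].
    + rewrite !Llt; try lia. apply: I1. lia.
    + rewrite c Leq Llt; last lia. have := HA ltac:(lia). rewrite (_ : i.-1 = j); last lia. lia.
    + rewrite c Leq Lgt; last lia. rewrite (_ : i.+1.-1 = i); last lia. have := HB ltac:(lia). lia.
    + rewrite !Lgt; try lia. have := I1 j.-1 ltac:(lia). rewrite (_ : j.-1.+1 = j); last lia.
      rewrite (_ : j.+1.-1 = j); last lia. by [].
  - move=> j1 j2 Hj Le Hb. rewrite Hs' in Hj.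
    have : j1 = i \/ j2 = i \/ (j1 <> i /\ j2 <> i) by lia.
    case=> [e1|[e2|[n1 n2]]].
    + subst j1.
      have : j2 = i.+1 \/ i.+1 < j2 by lia.
      case=> [e2|c].
      * subst j2. rewrite Zeq Zgt; last lia. rewrite Leq Lgt in Le; last lia.
        rewrite (_ : i.+1.-1 = i) in Le *; last lia. apply: HD; lia.
      * exfalso. have := Hb i.+1 ltac:(lia). rewrite -Le Leq Lgt; last lia.
        rewrite (_ : i.+1.-1 = i); last lia. have := HF ltac:(lia). lia.
    + subst j2.
      have : j1 = i.-1 \/ j1 < i.-1 by lia.
      case=> [e1|c].
      * subst j1. rewrite Zeq Zlt; last lia. rewrite Leq Llt in Le; last lia.
        apply: HC; [lia|by rewrite Le].
      * exfalso. have := Hb i.-1 ltac:(lia). rewrite Leq Llt; last lia. have := HE ltac:(lia). lia.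
    + pose o j := if j < i then j else j.-1.
      have Hlo : forall j, j <> i -> lay s' j = lay s (o j).
      { move=> j hj. rewrite /o. case: (ltnP j i) => h; [exact: Llt | apply: Lgt; lia]. }
      have Hzo : forall j, j <> i -> zz s' j = zz s (o j).
      { move=> j hj. rewrite /o. case: (ltnP j i) => h; [exact: Zlt | apply: Zgt; lia]. }
      rewrite !Hzo //. apply: I2.
      * rewrite /o. case: (ltnP j1 i) => a; case: (ltnP j2 i) => b; lia.
      * by rewrite -!Hlo.
      * move=> q Hq. pose nq := if q < i then q else q.+1.
        have Hnq : nq <> i by rewrite /nq; case: (ltnP q i) => a; lia.
        have Hoq : o nq = q by rewrite /o /nq; case: (ltnP q i) => a; [rewrite a | rewrite (_ : (q.+1 < i) = false); [|apply/negbTE; lia]]; lia.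
        rewrite -Hlo // -Hoq -Hlo //. apply: Hb.
        move: Hq. rewrite /o /nq.
        case: (ltnP q i) => a; case: (ltnP j1 i) => b; case: (ltnP j2 i) => c; lia.
Qed.

End Preserve.

Lemma INV_ext_all s i : INV s -> INV (extension s i (nl s i)).
Proof.
  move=> H. case: (leqP i (size s)) => h.
  - exact: INV_ext.
  - rewrite ext_over; last lia. rewrite nl_over; last lia. apply: INV_ext => //.
Qed.

Definition ST (p : seq nat) : seq (nat * Z) := foldl (fun s i => extension s i (nl s i)) [::] p.

Lemma ST_rcons p i : ST (rcons p i) = extension (ST p) i (nl (ST p) i).
Proof. by rewrite /ST -cats1 foldl_cat. Qed.

Lemma INV_nil : INV [::].
Proof. split=> [i /= h|i j /= h]; lia. Qed.

Lemma INV_ST p : INV (ST p).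
Proof.
  elim/last_ind: p => [|p i IH]; first exact: INV_nil.
  rewrite ST_rcons. exact: INV_ext_all.
Qed.

Lemma map_ext_colI s i x : map colI (extension s i x) = extension (map colI s) i (colI x).
Proof. by rewrite /extension map_cat map_take /= map_drop. Qed.

Theorem mainTheorem5 :
  exists T : seq nat -> seq 'I_12, complete_bifurcate_tree T.
Proof.
  exists (fun p => map colI (ST p)). move=> p _. split.
  - split; first by apply: sqfree_inv; exact: INV_ST.
    move=> i Hi. exists (colI (nl (ST p) i)). rewrite -map_ext_colI.
    apply: sqfree_inv. apply: INV_ext_all. exact: INV_ST.
  - move=> i Hi. exists (colI (nl (ST p) i)). by rewrite ST_rcons map_ext_colI.
Qed.
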